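(* Let $k\geq2$ and let $L=(l_1,\dots,l_k)$ be positive integers with sum $n$ which are generic and reduced. Then the Euler characteristic of $Tonn^{n,k}(L)$ is $0$.
   Context: $L=(l_1,\dots,l_k)$ is generic if for all subsets $I,J\subseteq[k]$, $\sum_{i\in I}l_i=\sum_{j\in J}l_j$ implies $I=J$. $L$ is reduced if $\gcd(l_1,\dots,l_k)=1$. The generalized tonnetz $Tonn^{n,k}(L)$ is the simplicial complex on vertex set $\mathbb{Z}_n$ whose maximal simplices are the sets $\Delta(x;\sigma)=\{x,\,x+l_{\sigma(1)},\dots,x+l_{\sigma(1)}+\dots+l_{\sigma(k-1)}\}$ (sums in $\mathbb{Z}_n$), for $x\in\mathbb{Z}_n$ and $\sigma\in S_k$; its simplices are all subsets of these sets. *)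

(* Defs.v *)
From mathcomp Require Import all_boot all_order all_fingroup all_algebra.
Set Implicit Arguments. Unset Strict Implicit. Unset Printing Implicit Defensive.

(* L = (l_1,...,l_k) is encoded as l : 'I_k -> nat (index i corresponds to l_{i+1}). *)

Definition generic (k : nat) (l : 'I_k -> nat) : Prop :=
  forall I J : {set 'I_k}, \sum_(i in I) l i = \sum_(j in J) l j -> I = J.

Definition reduced (k : nat) (l : 'I_k -> nat) : Prop :=
  \big[gcdn/0]_(i < k) l i = 1.

(* Vertex set Z_n is represented by 'I_n (residues 0..n-1).
   Delta(x; s) = { x + l_{s(0)} + ... + l_{s(i-1)} mod n | 0 <= i < k }. *)
Definition tonn_simplex (n k : nat) (l : 'I_k -> nat) (x : 'I_n) (s : 'S_k)
  : {set 'I_n} :=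
  [set y : 'I_n | [exists i : 'I_k,
     nat_of_ord y == (x + \sum_(j < k | j < i) l (s j)) %% n]].

Definition tonn_face (n k : nat) (l : 'I_k -> nat) (A : {set 'I_n}) : bool :=
  [exists x : 'I_n, exists s : 'S_k, A \subset tonn_simplex l x s].

(* Euler characteristic: sum over nonempty faces A of (-1)^(dim A) = (-1)^(|A|-1). *)
Definition tonn_euler_char (n k : nat) (l : 'I_k -> nat) : int :=
  \sum_(A : {set 'I_n} | (A != set0) && tonn_face l A) (-1) ^+ (#|A|.-1).

(* Main.v *)
Require Import Defs.
From mathcomp Require Import all_boot all_order all_fingroup all_algebra.
From mathcomp Require Import zify.
Set Implicit Arguments. Unset Strict Implicit. Unset Printing Implicit Defensive.

Section Tonn.
Variables (k : nat) (l : 'I_k -> nat).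
Hypothesis hk : 2 <= k.
Hypothesis hpos : forall i, 0 < l i.
Hypothesis hgen : generic l.

Local Notation n := (\sum_(i < k) l i).

Definition ssum (s : seq 'I_k) := \sum_(j <- s) l j.
Definition psum (s : seq 'I_k) i := ssum (take i s).
Definition isperm (s : seq 'I_k) := perm_eq s (enum 'I_k).

Lemma ssum_cat a b : ssum (a ++ b) = ssum a + ssum b.
Proof. by rewrite /ssum big_cat. Qed.

Lemma ssum_size s : size s <= ssum s.
Proof. rewrite /ssum -sum1_size; apply: leq_sum => i _; exact: hpos. Qed.

Lemma ssum_perm s : isperm s -> ssum s = n.
Proof. by move=> hs; rewrite /ssum (perm_big _ hs) big_enum. Qed.

Lemma size_perm s : isperm s -> size s = k.
Proof. by move=> hs; rewrite (perm_size hs) size_enum_ord. Qed.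

Lemma psum_catl a b i : i <= size a -> psum (a ++ b) i = psum a i.
Proof.
move=> hi; rewrite /psum take_cat; case: ltnP => // h.
have -> : i = size a by apply/eqP; rewrite eqn_leq hi h.
by rewrite subnn take0 cats0 take_size.
Qed.

Lemma psum_catr a b j : psum (a ++ b) (size a + j) = ssum a + psum b j.
Proof.
rewrite /psum take_cat ltnNge leq_addr /= addKn ssum_cat //.
Qed.

Lemma psum_size s i : size s <= i -> psum s i = ssum s.
Proof. by move=> h; rewrite /psum take_oversize. Qed.

Lemma psum_split s i j : psum s (i + j) = psum s i + psum (drop i s) j.
Proof. by rewrite /psum takeD ssum_cat. Qed.

Lemma psum_mono s i j : i <= j -> psum s i <= psum s j.
Proof. by move=> h; rewrite -(subnKC h) psum_split leq_addr. Qed.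

Lemma psum_strict s i j : i < j -> i < size s -> psum s i < psum s j.
Proof.
move=> h hi; rewrite -(subnKC (ltnW h)) psum_split.
suff: 0 < psum (drop i s) (j - i) by lia.
apply: leq_trans (ssum_size _).
rewrite size_take size_drop; case: (ltnP (j - i) (size s - i)) => _; lia.
Qed.

Lemma psum_le s i : psum s i <= ssum s.
Proof.
case: (leqP i (size s)) => h; last by rewrite psum_size // ltnW.
by rewrite -(psum_size (leqnn _)) psum_mono.
Qed.

Lemma psum_lt s i : i < size s -> psum s i < ssum s.
Proof. by move=> h; rewrite -(psum_size (leqnn _)) psum_strict. Qed.


Lemma npos : 0 < n.
Proof.
rewrite -(ssum_perm (perm_refl (enum 'I_k))).
apply: leq_trans (ssum_size _); rewrite size_enum_ord; lia.
Qed.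

Definition Zn (v : nat) : 'I_n := Ordinal (ltn_pmod v npos).
Lemma val_Zn v : val (Zn v) = v %% n. Proof. by []. Qed.
Lemma Zn_val (a : 'I_n) : Zn a = a.
Proof. by apply: val_inj; rewrite val_Zn modn_small. Qed.
Lemma ZnE u v : (Zn u == Zn v) = (u == v %[mod n]).
Proof. by []. Qed.
Lemma Zn_eq u v : u = v %[mod n] -> Zn u = Zn v.
Proof. by move=> h; apply/eqP; rewrite ZnE h. Qed.
Lemma Zn_addml u v : Zn (u %% n + v) = Zn (u + v).
Proof. by apply: Zn_eq; rewrite modnDml. Qed.

Definition SD (y : nat) (s : seq 'I_k) : {set 'I_n} :=
  [set Zn (y + psum s i) | i : 'I_k].

Lemma SDP a y s : reflect (exists i : 'I_k, a = Zn (y + psum s i)) (a \in SD y s).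
Proof.
apply: (iffP imsetP) => [[i _ ->]|[i ->]]; by exists i.
Qed.

Lemma SD_mod y s : SD (y %% n) s = SD y s.
Proof.
apply/setP => a; apply/SDP/SDP => -[i ->]; exists i; by rewrite Zn_addml.
Qed.

Lemma psum_nth e0 s m : m <= size s ->
  \sum_(0 <= j < m) l (nth e0 s j) = psum s m.
Proof.
elim: m => [|m IH] hm; first by rewrite big_nil /psum take0 /ssum big_nil.
rewrite big_nat_recr //= IH ?(ltnW hm) // /psum (take_nth e0 hm).
by rewrite /ssum -cats1 big_cat big_seq1.
Qed.

Lemma simplexE e0 (x : 'I_n) (sg : 'S_k) s : size s = k ->
  (forall j : 'I_k, sg j = nth e0 s j) -> tonn_simplex l x sg = SD x s.
Proof.
move=> hs hsg.
have hsum : forall i : 'I_k, \sum_(j < k | j < i) l (sg j) = psum s i.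
  move=> i; rewrite (eq_bigr (fun j : 'I_k => l (nth e0 s j))); last by move=> j _; rewrite hsg.
  rewrite -(big_mkord (fun j => j < i) (fun j => l (nth e0 s j))).
  rewrite (eq_bigl (fun j => true && (j < i))) //.
  by rewrite -big_nat_widen ?(ltnW (ltn_ord i)) // psum_nth // hs ltnW.
apply/setP => a; rewrite inE; apply/existsP/SDP => -[i hi]; exists i.
- by apply: val_inj => /=; rewrite (eqP hi) hsum.
- by apply/eqP; rewrite hi val_Zn hsum.
Qed.

Lemma perm_of_seq e0 s : isperm s -> exists sg : 'S_k, forall j : 'I_k, sg j = nth e0 s j.
Proof.
move=> hs.
have hu : uniq s by rewrite (perm_uniq hs) enum_uniq.
have hz : size s = k by apply: size_perm.
have inj : injective (fun j : 'I_k => nth e0 s j).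
  by move=> i j /eqP; rewrite nth_uniq ?hz // => /eqP /val_inj.
by exists (perm inj) => j; rewrite permE.
Qed.

Lemma seq_of_perm e0 (sg : 'S_k) :
  isperm (map sg (enum 'I_k)) /\ forall j : 'I_k, sg j = nth e0 (map sg (enum 'I_k)) j.
Proof.
split.
- apply: uniq_perm; first by rewrite map_inj_uniq ?enum_uniq //; exact: perm_inj.
    exact: enum_uniq.
  move=> a; rewrite mem_enum inE; apply/mapP; exists (sg^-1 a)%g; first by rewrite mem_enum.
  by rewrite permKV.
- by move=> j; rewrite (nth_map e0) ?size_enum_ord // nth_ord_enum.
Qed.

Definition faceS (A : {set 'I_n}) :=
  exists (y : 'I_n) s, isperm s /\ A \subset SD y s.

Lemma faceE A : tonn_face l A <-> faceS A.
Proof.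
have e0 : 'I_k by exact: Ordinal (ltnW hk).
split.
- case/existsP => x /existsP [sg hA].
  have [hp hn] := seq_of_perm e0 sg.
  exists x, (map sg (enum 'I_k)); split => //.
  by rewrite -(@simplexE e0 x sg) // size_map size_enum_ord.
- case=> y [s [hs hA]].
  have [sg hsg] := perm_of_seq e0 hs.
  apply/existsP; exists y; apply/existsP; exists sg.
  by rewrite (@simplexE e0 y sg s) // size_perm.
Qed.


Definition isgap (A : {set 'I_n}) (a : 'I_n) d :=
  [/\ 0 < d, Zn (a + d) \in A & forall d', 0 < d' < d -> Zn (a + d') \notin A].

Lemma isgap_uniq (A : {set 'I_n}) a d1 d2 : isgap A a d1 -> isgap A a d2 -> d1 = d2.
Proof.
case=> h1 i1 g1 [h2 i2 g2]; case: (ltngtP d1 d2) => // h.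
- by move: (g2 d1); rewrite h1 h i1 => /(_ isT).
- by move: (g1 d2); rewrite h2 h i2 => /(_ isT).
Qed.

Lemma psumk s : isperm s -> psum s k = n.
Proof. by move=> hs; rewrite psum_size ?size_perm // ssum_perm. Qed.

Lemma gapL (A : {set 'I_n}) (x : nat) s p : isperm s -> A \subset SD x s -> Zn x \in A -> p < k ->
  Zn (x + psum s p) \in A ->
  exists2 p', p < p' <= k &
   [/\ Zn (x + psum s p') \in A,
       forall r, p < r < p' -> Zn (x + psum s r) \notin A &
       isgap A (Zn (x + psum s p)) (psum s p' - psum s p)].
Proof.
move=> hs hA hx hp hpA.
have hz := size_perm hs.
pose P r := (p < r) && ((r == k) || (Zn (x + psum s r) \in A)).
have exP : exists r, P r by exists k; rewrite /P hp eqxx.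
case: (ex_minnP exP) => p' /andP [hpp' hP] hmin.
have hp'k : p' <= k by apply: hmin; rewrite /P hp eqxx.
have hp'A : Zn (x + psum s p') \in A.
  case/orP: hP => // /eqP ->; rewrite psumk //.
  by rewrite (@Zn_eq (x + n) x) // modnDr.
have hgap : forall r, p < r < p' -> Zn (x + psum s r) \notin A.
  move=> r /andP [h1 h2]; apply/negP => hr.
  have : p' <= r by apply: hmin; rewrite /P h1 hr orbT.
  by rewrite leqNgt h2.
exists p'; rewrite ?hpp' ?hp'k //; split => //; split.
- by rewrite subn_gt0 psum_strict // hz.
- rewrite Zn_addml -addnA subnKC //; exact: psum_mono (ltnW hpp').
- move=> d' /andP [hd1 hd2]; rewrite Zn_addml; apply/negP => hin.
  have /SDP [r hr] := subsetP hA _ hin.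
  move/eqP: hr; rewrite ZnE -addnA eqn_modDl.
  have hlt : psum s p + d' < n.
    apply: (@leq_trans (psum s p')); first by rewrite -ltn_subRL.
    by rewrite -(ssum_perm hs) psum_le.
  have hrn : psum s r < n by rewrite -(ssum_perm hs) psum_lt // hz.
  rewrite !modn_small // => /eqP hr.
  case: (leqP r p) => h1.
  + by move: (psum_mono s h1); rewrite -hr; lia.
  case: (ltnP r p') => h2.
  + by move: (hgap r); rewrite h1 h2 -hr addnA hin => /(_ isT).
  + move: (psum_mono s h2); rewrite -hr.
    have : d' < psum s p' - psum s p by [].
    lia.
Qed.


Definition e0 : 'I_k := Ordinal (ltnW hk).

Definition GoodP (A : {set 'I_n}) (x : 'I_n) :=
  x \in A /\ exists u, isperm (rcons u e0) /\ A \subset SD x (rcons u e0).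

Lemma sum_set u : uniq u -> \sum_(i in [set i in u]) l i = ssum u.
Proof.
move=> hu; rewrite /ssum big_uniq //; apply: eq_bigl => i; by rewrite inE.
Qed.

Lemma psum0 s : psum s 0 = 0.
Proof. by rewrite /psum take0 /ssum big_nil. Qed.

Lemma Good_uniq A x1 x2 : GoodP A x1 -> GoodP A x2 -> x1 = x2.
Proof.
move=> [hx1 [u1 [hs1 hA1]]] [hx2 [u2 [hs2 hA2]]].
set s1 := rcons u1 e0 in hs1 hA1; set s2 := rcons u2 e0 in hs2 hA2.
have hz1 := size_perm hs1; have hz2 := size_perm hs2.
have hu1 : size u1 = k.-1 by move: hz1; rewrite size_rcons; lia.
have hu2 : size u2 = k.-1 by move: hz2; rewrite size_rcons; lia.
have hx1' : Zn x1 \in A by rewrite Zn_val.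
have hx2' : Zn x2 \in A by rewrite Zn_val.
pose P r := (r < k) && (Zn (x1 + psum s1 r) \in A).
have exP : exists r, P r by exists 0; rewrite /P psum0 addn0 hx1' ltnW.
have ubP : forall r, P r -> r <= k by move=> r /andP [h _]; exact: ltnW.
case: (ex_maxnP exP ubP) => m1 /andP [hm1 hm1A] hmax.
have [p' /andP [hmp hpk] [hp'A _ hg1]] := gapL hs1 hA1 hx1' hm1 hm1A.
have hp'k : p' = k.
  apply/eqP; rewrite eqn_leq hpk leqNgt; apply/negP => hlt.
  have : p' <= m1 by apply: hmax; rewrite /P hlt hp'A.
  by rewrite leqNgt hmp.
rewrite hp'k psumk // in hg1.
set a1 := Zn (x1 + psum s1 m1) in hg1 hm1A.
have /SDP [j2 hj2] := subsetP hA2 _ hm1A.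
have hj2A : Zn (x2 + psum s2 j2) \in A by rewrite -hj2.
have [q /andP [hjq hqk] [hqA _ hg2]] := gapL hs2 hA2 hx2' (ltn_ord j2) hj2A.
rewrite -hj2 in hg2.
have hd := isgap_uniq hg1 hg2.
have hq : q = k.
  apply/eqP; rewrite eqn_leq hqk leqNgt; apply/negP => hlt.
  have hu1u : uniq s1 by rewrite (perm_uniq hs1) enum_uniq.
  have hu2u : uniq s2 by rewrite (perm_uniq hs2) enum_uniq.
  have E1 : ssum (drop m1 s1) = n - psum s1 m1.
    have : ssum s1 = psum s1 m1 + ssum (drop m1 s1) by rewrite /psum -ssum_cat cat_take_drop.
    by rewrite (ssum_perm hs1) => ->; rewrite addKn.
  have E2 : ssum (take (q - j2) (drop j2 s2)) = psum s2 q - psum s2 j2.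
    have := psum_split s2 j2 (q - j2); rewrite subnKC ?(ltnW hjq) // => ->.
    by rewrite addKn.
  have hI := hgen (I := [set i in drop m1 s1]) (J := [set i in take (q - j2) (drop j2 s2)]).
  rewrite (sum_set (drop_uniq m1 hu1u)) (sum_set (take_uniq (q - j2) (drop_uniq j2 hu2u))) in hI.
  rewrite E1 E2 hd in hI.
  have he1 : e0 \in [set i in drop m1 s1].
    rewrite inE /s1 -cats1 drop_cat hu1.
    case: ltnP => h; first by rewrite mem_cat mem_seq1 eqxx orbT.
    by have -> : m1 - k.-1 = 0 by clear -hm1 h; lia.
  rewrite (hI erefl) inE in he1.
  have : e0 \in u2.
    move: he1; rewrite /s2 -cats1 drop_cat hu2.
    have -> : j2 < k.-1 by clear -hjq hlt; lia.
    rewrite take_cat size_drop hu2.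
    case: ltnP => h; first by move/mem_take/mem_drop.
    have -> : q - j2 - (k.-1 - j2) = 0 by clear -hjq hlt h; lia.
    by rewrite take0 cats0 => /mem_drop.
  by move: hu2u; rewrite /s2 rcons_uniq => /andP [/negP].
rewrite hq psumk // in hd.
have -> : x1 = Zn (a1 + (n - psum s1 m1)).
  have hle : psum s1 m1 <= n by rewrite -(ssum_perm hs1) psum_le.
  rewrite Zn_addml -addnA subnKC //.
  by rewrite (@Zn_eq (x1 + n) x1) ?Zn_val // modnDr.
have hle : psum s2 j2 <= n by rewrite -(ssum_perm hs2) psum_le.
rewrite hd hj2 Zn_addml -addnA subnKC //.
by rewrite (@Zn_eq (x2 + n) x2) ?Zn_val // modnDr.
Qed.


Lemma isperm_rot a b : isperm (a ++ b) -> isperm (b ++ a).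
Proof. by rewrite /isperm -(perm_catC a b). Qed.

Lemma rotL (A : {set 'I_n}) y a b : isperm (a ++ b) -> A \subset SD y (a ++ b) ->
  A \subset SD (y + ssum a) (b ++ a).
Proof.
move=> hs hA; have hz := size_perm hs; rewrite size_cat in hz.
have hn := ssum_perm hs; rewrite ssum_cat in hn.
apply/subsetP => z /(subsetP hA) /SDP [i ->]; apply/SDP.
case: (ltnP i (size a)) => hi.
- have hlt : size b + i < k by clear -hz hi; lia.
  exists (Ordinal hlt) => /=.
  rewrite psum_catl ?(ltnW hi) // psum_catr; apply: Zn_eq.
  by rewrite addnA -(addnA y) hn -addnA (addnC n) addnA modnDr.
- have hlt : i - size a < k by move: (ltn_ord i); clear -hz hi; lia.
  exists (Ordinal hlt) => /=.
  have hi' : i = size a + (i - size a) :> nat by rewrite subnKC.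
  rewrite [in LHS]hi' psum_catr psum_catl ?addnA //.
  by move: (ltn_ord i); clear -hz hi; lia.
Qed.

Lemma shiftL (A : {set 'I_n}) y a b c d : size b < k ->
  A \subset SD y (a ++ b ++ c) ->
  (forall j : 'I_k, Zn (y + psum (a ++ b ++ c) j) \in A -> size a <= j <= size a + size b) ->
  A \subset SD (y + ssum a) (b ++ d).
Proof.
move=> hb hA hpos'; apply/subsetP => z hz.
have /SDP [i hi] := subsetP hA _ hz.
have /andP [h1 h2] : size a <= i <= size a + size b by apply: hpos'; rewrite -hi.
have hlt : i - size a < k by apply: leq_ltn_trans hb; clear -h2; lia.
apply/SDP; exists (Ordinal hlt) => /=; rewrite hi.
have hle : i - size a <= size b by clear -h2; lia.
have hi' : i = size a + (i - size a) :> nat by rewrite subnKC.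
by rewrite [in LHS]hi' psum_catr !psum_catl // addnA.
Qed.


Lemma Good_exists (A : {set 'I_n}) : A != set0 -> faceS A -> exists x, GoodP A x.
Proof.
move=> hne [y [s [hs hA]]].
have he : e0 \in s by rewrite (perm_mem hs) mem_enum.
move: hs hA; case/splitPr: he => s1 s2 hs hA.
have E : s1 ++ e0 :: s2 = (s1 ++ [:: e0]) ++ s2 by rewrite -catA.
rewrite E in hs hA.
have hA1 := rotL hs hA.
have hs1 := isperm_rot hs.
set y' := y + ssum (s1 ++ [:: e0]) in hA1.
set w := s2 ++ s1.
have Ew : s2 ++ s1 ++ [:: e0] = w ++ [:: e0] by rewrite catA.
rewrite Ew in hA1 hs1.
have hzw : size w = k.-1.
  by move: (size_perm hs1); rewrite size_cat /=; clear; lia.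
pose P r := (r < k) && (Zn (y' + psum (w ++ [:: e0]) r) \in A).
have exP : exists r, P r.
  case/set0Pn: hne => z hz; have /SDP [i hi] := subsetP hA1 _ hz.
  by exists i; rewrite /P ltn_ord -hi.
case: (ex_minnP exP) => q0 /andP [hq0 hq0A] hmin.
have hq0w : q0 <= size w by rewrite hzw; clear -hq0; lia.
have E2 : w ++ [:: e0] = take q0 w ++ drop q0 w ++ [:: e0] by rewrite catA cat_take_drop.
have hA2 := @shiftL A y' (take q0 w) (drop q0 w) [:: e0] (take q0 w ++ [:: e0]).
rewrite -E2 in hA2.
have hsa : size (take q0 w) = q0 by rewrite size_takel.
have hsb : size (drop q0 w) = k.-1 - q0 by rewrite size_drop hzw.
have hA3 := hA2 (ltac:(rewrite hsb; clear -hq0; lia)) hA1.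
have {hA2 hA3} hA4 : A \subset SD (y' + ssum (take q0 w)) (drop q0 w ++ take q0 w ++ [:: e0]).
  apply: hA3 => j hj; rewrite hsa hsb; apply/andP; split.
  - by apply: hmin; rewrite /P ltn_ord.
  - by move: (ltn_ord j) hq0; clear; lia.
exists (Zn (y' + ssum (take q0 w))); split.
- move: hq0A; rewrite psum_catl //.
exists (drop q0 w ++ take q0 w); split.
- rewrite -cats1 -catA /isperm.
  apply: perm_trans hs1; rewrite E2 catA [X in perm_eq _ X]catA.
  by apply: perm_cat (perm_refl _); rewrite perm_catC.
- by rewrite -cats1 -catA val_Zn SD_mod.
Qed.


Lemma klast_lt : k.-1 < k. Proof. by rewrite ltn_predL ltnW. Qed.
Definition klast : 'I_k := Ordinal klast_lt.

Definition vt (x : 'I_n) : 'I_n := Zn (x + (n - l e0)).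

Lemma ssum_u u : isperm (rcons u e0) -> ssum u = n - l e0.
Proof.
move=> hs; rewrite -(ssum_perm hs) -cats1 ssum_cat /ssum big_seq1 addnK //.
Qed.

Lemma size_u u : isperm (rcons u e0) -> size u = k.-1.
Proof. by move=> hs; move: (size_perm hs); rewrite size_rcons; clear; lia. Qed.

Lemma vt_in (A : {set 'I_n}) x u : isperm (rcons u e0) -> vt x \in SD x (rcons u e0).
Proof.
move=> hs; apply/SDP; exists klast => /=.
rewrite -cats1 psum_catl ?size_u // psum_size ?size_u // ssum_u //.
Qed.

Lemma vt_neq x u : isperm (rcons u e0) -> vt x != x.
Proof.
move=> hs; rewrite -{2}(Zn_val x) /vt ZnE -{2}(addn0 x) eqn_modDl mod0n.
have h1 := ssum_size u; rewrite size_u // in h1.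
have h2 : 0 < l e0 := hpos e0.
rewrite -(ssum_u hs) modn_small.
- by rewrite -lt0n; apply: leq_trans h1; clear -hk; lia.
- have := ssum_perm hs; rewrite -cats1 ssum_cat /ssum big_seq1 => <-.
  by rewrite -addn1 leq_add2l.
Qed.

Definition tog (A : {set 'I_n}) (v : 'I_n) : {set 'I_n} := if v \in A then A :\ v else v |: A.

Lemma Good_toggle A x : GoodP A x -> GoodP (tog A (vt x)) x.
Proof.
move=> [hx [u [hs hA]]]; have hne := vt_neq x hs.
rewrite /tog; case: ifP => hv; split.
- by rewrite in_setD1 eq_sym hne.
- by exists u; split => //; apply: subset_trans hA; exact: subD1set.
- by rewrite in_setU1 hx orbT.
- exists u; split => //; rewrite subUset hA andbT sub1set; exact: vt_in.
Qed.

Definition GoodB (A : {set 'I_n}) (x : 'I_n) :=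
  (x \in A) && [exists sg : 'S_k, (sg klast == e0) && (A \subset tonn_simplex l x sg)].

Lemma GoodBP A x : reflect (GoodP A x) (GoodB A x).
Proof.
apply: (iffP andP) => [[hx /existsP [sg /andP [/eqP hl hA]]]|[hx [u [hs hA]]]].
- split => //; have [hp hn] := seq_of_perm e0 sg.
  set s := map sg (enum 'I_k) in hp hn.
  have hz : size s = k by rewrite size_map size_enum_ord.
  have Es : s = rcons (take k.-1 s) e0.
    rewrite -cats1 -{1}(cat_take_drop k.-1 s); congr (_ ++ _).
    rewrite (drop_nth e0); last by rewrite hz klast_lt.
    rewrite drop_oversize; last by rewrite hz prednK // ltnW.
    by rewrite -[in RHS]hl hn.
  exists (take k.-1 s); rewrite -Es; split => //.
  by rewrite -(@simplexE e0 x sg).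
- split => //; have [sg hsg] := perm_of_seq e0 hs.
  apply/existsP; exists sg; apply/andP; split.
  + 
    by rewrite hsg nth_rcons size_u // ltnn eqxx.
  + 
    by rewrite (@simplexE e0 x sg (rcons u e0)) // size_perm.
Qed.

Definition Pf (A : {set 'I_n}) := (A != set0) && tonn_face l A.

Definition wx (A : {set 'I_n}) : 'I_n :=
  if [pick x | GoodB A x] is Some x then x else Zn 0.

Lemma wx_good A : Pf A -> GoodP A (wx A).
Proof.
case/andP => hne /faceE hf; rewrite /wx; case: pickP => [x /GoodBP //|none].
have [x hx] := Good_exists hne hf.
by move: (none x); rewrite (introT (GoodBP A x) hx).
Qed.

Lemma Good_Pf A x : GoodP A x -> Pf A.
Proof.
move=> [hx [u [hs hA]]]; apply/andP; split; first by apply/set0Pn; exists x.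
by apply/faceE; exists x, (rcons u e0).
Qed.

Definition g (A : {set 'I_n}) : {set 'I_n} := if Pf A then tog A (vt (wx A)) else A.

Lemma gK : involutive g.
Proof.
move=> A; rewrite /g; case: (boolP (Pf A)) => hP; last by rewrite (negbTE hP).
have hG := Good_toggle (wx_good hP).
rewrite (Good_Pf hG).
have -> : wx (tog A (vt (wx A))) = wx A := Good_uniq (wx_good (Good_Pf hG)) hG.
rewrite /tog; case: (boolP (vt (wx A) \in A)) => hv.
- by rewrite in_setD1 eqxx /= setD1K.
- by rewrite setU11 setU1K.
Qed.


Lemma Pf_g A : Pf (g A) = Pf A.
Proof.
rewrite /g; case: (boolP (Pf A)) => hP; last by rewrite (negbTE hP).
exact: Good_Pf (Good_toggle (wx_good hP)).
Qed.

Lemma sgn_step (a b : nat) : 0 < b -> a = b.+1 ->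
  ((-1) ^+ (a.-1) = - (-1) ^+ (b.-1) :> int)%R.
Proof.
move=> hb ->; case: b hb => // b _ /=.
by rewrite GRing.exprS GRing.mulN1r.
Qed.

Lemma card_g A : Pf A -> ((-1) ^+ (#|g A|.-1) = - (-1) ^+ (#|A|.-1) :> int)%R.
Proof.
move=> hP; have hP' : Pf (g A) by rewrite Pf_g.
have ne1 : 0 < #|A| by case/andP: hP => /set0Pn [x hx] _; apply/card_gt0P; exists x.
have ne2 : 0 < #|g A| by case/andP: hP' => /set0Pn [x hx] _; apply/card_gt0P; exists x.
move: ne2; rewrite /g hP /tog; case: (boolP (vt (wx A) \in A)) => hv ne2.
- have hc : #|A| = #|A :\ vt (wx A)|.+1 by rewrite (cardsD1 (vt (wx A)) A) hv.
  by rewrite [in RHS](sgn_step ne2 hc) GRing.opprK.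
- by rewrite (sgn_step ne1) // cardsU1 hv.
Qed.

Lemma chi0 : tonn_euler_char n l = 0%R.
Proof.
rewrite /tonn_euler_char.
have hinj : injective g := inv_inj gK.
set S := (\sum_(A | _) _)%R.
have E : S = (- S)%R.
  rewrite {1}/S (reindex_inj hinj) /= /S -GRing.sumrN.
  apply: eq_big => A; first exact: Pf_g.
  move=> hP; have : Pf (g A) := hP; rewrite Pf_g => {}hP; exact: card_g.
move: E; clear; lia.
Qed.

End Tonn.

Theorem proposition2p6 (k : nat) (l : 'I_k -> nat)
  (hk : 2 <= k) (hpos : forall i, 0 < l i)
  (hgen : generic l) (hred : reduced l) :
  tonn_euler_char (\sum_(i < k) l i) l = 0%R.
Proof. exact: chi0. Qed.
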